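(* Let $R$ be a noetherian integral domain, $n\ge1$, $R[n]=R[t]/(t^n)$, and $M$ an $R[n]$-module of finite type. Let $M^\vee=\mathrm{Hom}_{R[n]}(M,R[n])$ and let $t_M:M\to M^{\vee\vee}$ be the canonical morphism, $t_M(m)(\phi)=\phi(m)$. Then $\ker(t_M)=T(M)$.
   Context: An element $u=\sum_{i=0}^{n-1}u_it^i\in R[n]$ ($u_i\in R$) is a non-zero-divisor iff $u_0\ne0$; let $S_n$ be the set of non-zero-divisors. The torsion submodule $T(M)$ is the set of $m\in M$ such that $\alpha m=0$ for some $\alpha\in S_n$. *)

(* Defs.v *)
From HB Require Import structures.
From mathcomp Require Import all_boot all_order all_algebra.
From mathcomp Require Export qpoly.
Set Implicit Arguments. Unset Strict Implicit. Unset Printing Implicit Defensive.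
Import GRing.Theory.
Local Open Scope ring_scope.

Definition is_ideal (R : comNzRingType) (I : R -> Prop) : Prop :=
  [/\ I 0,
      (forall x y, I x -> I y -> I (x + y)) &
      (forall r x, I x -> I (r * x))].

Definition noetherian (R : comNzRingType) : Prop :=
  forall I : R -> Prop, is_ideal I ->
    exists s : seq R, forall x, I x <->
      exists cs : seq R, size cs = size s /\ x = \sum_(i < size s) cs`_i * s`_i.

(* R[n] = R[t]/(t^n), realised as the quotient ring {poly %/ 'X^n}. *)
Notation truncpoly R n := {poly %/ ('X^n : {poly R})}.

Definition finite_type_mod (A : pzRingType) (M : lmodType A) : Prop :=
  exists s : seq M, forall m : M,
    exists cs : seq A, size cs = size s /\ m = \sum_(i < size s) cs`_i *: s`_i.

Definition nonzerodivisor (A : pzRingType) (u : A) : Prop :=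
  forall v : A, u * v = 0 -> v = 0.

Definition torsion (A : pzRingType) (M : lmodType A) (m : M) : Prop :=
  exists alpha : A, nonzerodivisor alpha /\ alpha *: m = 0.

(* M^vee = Hom_A(M, A) is the type {linear M -> A^o}; the canonical map
   t_M : M -> M^{vee vee}, t_M(m)(phi) = phi(m). *)
Definition t_M (A : pzRingType) (M : lmodType A) (m : M) :
  {linear M -> A^o} -> A := fun phi => phi m.

Definition ker_tM (A : pzRingType) (M : lmodType A) (m : M) : Prop :=
  t_M m = (fun _ => 0).

(* Main.v *)
Require Import Defs.
From HB Require Import structures.
From mathcomp Require Import all_boot all_order all_algebra.
From mathcomp Require Import qpoly.
From Stdlib Require Import ClassicalEpsilon FunctionalExtensionality.
From mathcomp Require Import zify.
Set Implicit Arguments. Unset Strict Implicit. Unset Printing Implicit Defensive.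
Import GRing.Theory Pdiv.RingMonic Pdiv.CommonRing.
Local Open Scope ring_scope.

Section Core.
Variables (R : idomainType) (n : nat).
Local Notation A := (truncpoly R n).
Variable (M : lmodType A).

Definition sR (r : R) (x : M) : M := (r%:A : A) *: x.

Lemma sRA a b x : sR a (sR b x) = sR (a * b) x.
Proof. by rewrite /sR scalerA mulr_algl scalerA. Qed.
Lemma sRDr a x y : sR a (x + y) = sR a x + sR a y.
Proof. by rewrite /sR scalerDr. Qed.
Lemma sRDl a b x : sR (a + b) x = sR a x + sR b x.
Proof. by rewrite /sR scalerDl scalerDl. Qed.
Lemma sR1 x : sR 1 x = x.
Proof. by rewrite /sR !scale1r. Qed.
Lemma sR0 x : sR 0 x = 0.
Proof. by rewrite /sR !scale0r. Qed.
Lemma sRx0 a : sR a 0 = 0.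
Proof. by rewrite /sR scaler0. Qed.
Lemma sRN1 x : sR (-1) x = - x.
Proof. by rewrite /sR !scaleN1r. Qed.

Lemma sRN a x : sR (- a) x = - sR a x.
Proof. by rewrite /sR !scaleNr. Qed.
Lemma sRB a b x : sR (a - b) x = sR a x - sR b x.
Proof. by rewrite sRDl sRN. Qed.

Variable m : M.

Fixpoint span (g : seq M) : M -> Prop :=
  match g with
  | [::] => fun y => exists a, y = sR a m
  | x :: g' => fun y => exists w a, span g' w /\ y = w + sR a x
  end.

Lemma span_lin g a y z : span g y -> span g z -> span g (sR a y + z).
Proof.
elim: g a y z => [|x g IH] a y z /=.
  by move=> [b ->] [c ->]; exists (a * b + c); rewrite sRDl sRA.
move=> [w [b [Hw ->]]] [w' [c [Hw' ->]]].
exists (sR a w + w'), (a * b + c); split; first exact: IH.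
by rewrite sRDr sRDl sRA; rewrite !addrA; congr (_ + _); rewrite -!addrA; congr (_ + _); rewrite addrC.
Qed.

Lemma span0 g : span g 0.
Proof.
elim: g => [|x g IH] /=; first by exists 0; rewrite sR0.
by exists 0, 0; rewrite sR0 addr0.
Qed.

Lemma span_m g : span g m.
Proof.
elim: g => [|x g IH] /=; first by exists 1; rewrite sR1.
by exists m, 0; rewrite sR0 addr0.
Qed.

Lemma span_add g y z : span g y -> span g z -> span g (y + z).
Proof. by move=> Hy Hz; have := span_lin 1 Hy Hz; rewrite sR1. Qed.

Lemma span_mem g x : x \in g -> span g x.
Proof.
elim: g => [|x' g IH] //=; rewrite inE => /orP [/eqP ->|Hx].
  by exists 0, 1; rewrite sR1 add0r; split => //; apply: span0.
by exists x, 0; rewrite sR0 addr0; split => //; apply: IH.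
Qed.

Definition rlin (g : seq M) (lam : M -> R) :=
  forall a y z, span g y -> span g z -> lam (sR a y + z) = a * lam y + lam z.

Lemma rlin0 g lam : rlin g lam -> lam 0 = 0.
Proof.
move=> H; have := H 1 0 0 (span0 g) (span0 g).
rewrite addr0 mul1r sRx0 => /(congr1 (fun t => t - lam 0)) /=.
by rewrite addrK subrr => E; rewrite -E.
Qed.

Hypothesis tf : forall a, sR a m = 0 -> a = 0.

Lemma core g : exists lam : M -> R, lam m != 0 /\ rlin g lam.
Proof.
have inh : inhabited R by constructor; exact 0.
have inhM : inhabited M by constructor; exact 0.
elim: g => [|x g [lam' [Hm' Hl']]].
  pose lam y := epsilon inh (fun a => y = sR a m).
  have lamE a : lam (sR a m) = a.
    have := @epsilon_spec _ inh (fun b => sR a m = sR b m) (ex_intro _ a erefl).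
    rewrite -/(lam _) => E; apply/eqP; rewrite eq_sym -subr_eq0; apply/eqP/tf.
    by rewrite sRB -E subrr.
  exists lam; split.
    by rewrite -{1}(sR1 m) lamE oner_eq0.
  move=> a y z [b ->] [c ->]; by rewrite sRA -sRDl !lamE.
have lam'0 := rlin0 Hl'.
case: (classic (exists d, d != 0 /\ span g (sR d x))) => [[d [dn0 Hd]]|Hnd].
  have Hin y : span (x :: g) y -> span g (sR d y).
    move=> [w [b [Hw ->]]]; rewrite sRDr sRA mulrC -sRA addrC.
    by apply: span_lin => //; rewrite -[sR d w]addr0; apply: span_lin => //; apply: span0.
  exists (fun y => lam' (sR d y)); split.
    rewrite -[sR d m]addr0 Hl' ?lam'0 ?addr0 ?mulf_neq0 //; [exact: span_m|exact: span0].
  move=> a y z Hy Hz; rewrite sRDr sRA mulrC -sRA.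
  by rewrite Hl' //; apply: Hin.
have uniq w1 w2 a1 a2 : span g w1 -> span g w2 -> w1 + sR a1 x = w2 + sR a2 x ->
    w1 = w2 /\ a1 = a2.
  move=> H1 H2 E.
  have E2 : sR (a1 - a2) x = sR (-1) w1 + w2.
    rewrite sRN1 sRB; apply/eqP; rewrite subr_eq -addrA -E.
    by rewrite addKr.
  have Hsp : span g (sR (a1 - a2) x) by rewrite E2; apply: span_lin.
  have a12 : a1 = a2.
    apply/eqP; rewrite -subr_eq0; apply/negPn/negP => Hne.
    by apply: Hnd; exists (a1 - a2).
  split => //; move: E; rewrite a12 => /addIr.
  done.
pose P y := fun w => span g w /\ exists a, y = w + sR a x.
pose lam y := lam' (epsilon inhM (P y)).
have lamE w a : span g w -> lam (w + sR a x) = lam' w.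
  move=> Hw; have [H1 [b Hb]] := @epsilon_spec _ inhM (P (w + sR a x))
     (ex_intro _ w (conj Hw (ex_intro _ a erefl))).
  rewrite /lam; have [<- _] := uniq _ _ _ _ Hw H1 Hb. done.
exists lam; split.
  by have := lamE m 0 (span_m g); rewrite sR0 addr0 => ->.
move=> a y z [w [b [Hw ->]]] [w' [c [Hw' ->]]].
have -> : sR a (w + sR b x) + (w' + sR c x) = (sR a w + w') + sR (a * b + c) x.
  rewrite sRDr sRA sRDl !addrA; congr (_ + _); rewrite -!addrA; congr (_ + _); exact: addrC.
rewrite !lamE //; last exact: span_lin.
exact: Hl'.
Qed.

End Core.

Lemma shift_sum (R : pzRingType) (V : lmodType R) (N : nat) (f : nat -> R) (E : nat -> V) :
  (0 < N)%N -> f N = 0 -> E N = 0 ->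
  \sum_(j < N) f j.+1 *: E (N.-1 - j)%N = \sum_(j < N) f j *: E (N - j)%N.
Proof.
case: N => [//|k] _ fN EN.
rewrite big_ord_recr big_ord_recl /= subnn subn0 fN EN scale0r scaler0 addr0 add0r.
by apply: eq_bigr => j _; rewrite subSS.
Qed.

Section Phi.
Variables (R : idomainType) (n : nat).
Local Notation A := (truncpoly R n).
Variable (M : lmodType A).
Hypothesis n_gt0 : (0 < n)%N.
Variable lam : M -> R.
Hypothesis hlam : forall a y z, lam (sR a y + z) = a * lam y + lam z.

Lemma lam0 : lam 0 = 0.
Proof.
have := hlam 1 0 0; rewrite addr0 mul1r sRx0 => /(congr1 (fun t => t - lam 0)) /=.
by rewrite addrK subrr => E; rewrite -E.
Qed.
Lemma lamD y z : lam (y + z) = lam y + lam z.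
Proof. by rewrite -[y in LHS]sR1 hlam mul1r. Qed.
Lemma lamR a y : lam (sR a y) = a * lam y.
Proof. by rewrite -[sR a y]addr0 hlam lam0 addr0. Qed.

Definition e k : A := in_qpoly ('X^n : {poly R}) ('X^k).

Lemma eD i j : e (i + j) = e i * e j.
Proof. by rewrite /e exprD rmorphM. Qed.
Lemma e0 : e 0 = 1.
Proof. by rewrite /e expr0 rmorph1. Qed.
Lemma mkXn : mk_monic ('X^n : {poly R}) = 'X^n.
Proof. by rewrite mk_monic_Xn prednK. Qed.
Lemma en : e n = 0.
Proof. apply: val_inj => /=; rewrite mkXn Pdiv.RingMonic.rmodpp //; exact: monicXn. Qed.
Lemma val_e k : (k < n)%N -> (e k : {poly R}) = 'X^k.
Proof. by move=> kn; rewrite /e in_qpoly_small // mkXn !size_polyXn. Qed.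
Lemma sizeA (c : A) : (size (c : {poly R}) <= n)%N.
Proof. apply: leq_trans (size_npoly c) _; by rewrite mkXn size_polyXn. Qed.

Definition phi (x : M) : A^o := \sum_(j < n) lam (e j *: x) *: e (n.-1 - j)%N.

Lemma phiD x y : phi (x + y) = phi x + phi y.
Proof. by rewrite /phi -big_split /=; apply: eq_bigr => j _; rewrite scalerDr lamD scalerDl. Qed.
Lemma phi0 : phi 0 = 0.
Proof. by rewrite /phi big1 // => j _; rewrite scaler0 lam0 scale0r. Qed.
Lemma phiR a x : phi (sR a x) = a%:A * phi x.
Proof.
rewrite /phi mulr_sumr; apply: eq_bigr => j _.
rewrite /sR scalerA mulrC -scalerA -/(sR a _) lamR mulr_algl scalerA //.
Qed.

Lemma phiX x : phi (e 1 *: x) = e 1 * phi x.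
Proof.
rewrite /phi mulr_sumr.
under eq_bigr do rewrite scalerA -(eD _ 1) addn1.
have -> : \sum_(i < n) e 1 * (lam (e i *: x) *: e (n.-1 - i)%N)
   = \sum_(i < n) lam (e i *: x) *: e (n - i)%N.
  apply: eq_bigr => j _; rewrite -scalerAr -eD; congr (_ *: e _).
  by rewrite add1n -subSn ?prednK // -ltnS prednK.
apply: (shift_sum (f := fun j => lam (e j *: x)) (E := e)) => //.
all: by rewrite ?en ?scale0r ?lam0.
Qed.

Lemma phiE k x : phi (e k *: x) = e k * phi x.
Proof.
elim: k x => [|k IH] x; first by rewrite e0 scale1r mul1r.
by rewrite -addn1 eD -scalerA IH phiX mulrA.
Qed.

Lemma decomp (c : A) : c = \sum_(i < n) ((c : {poly R})`_i)%:A * e i.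
Proof.
apply: val_inj => /=.
rewrite -/(polyn _) poly_of_qpoly_sum.
apply/polyP => k; rewrite coef_sum.
under eq_bigr => i _ do rewrite mulr_algl poly_of_qpolyZ val_e // coefZ coefXn.
case: (ltnP k n) => kn.
  rewrite (bigD1 (Ordinal kn)) //= eqxx mulr1 big1 ?addr0 // => i /eqP ik.
  by rewrite eq_sym; case: eqP => [kE|]; [case: ik; apply: val_inj|]; rewrite ?mulr0.
rewrite nth_default; last exact: leq_trans (sizeA c) kn.
rewrite big1 // => i _; case: eqP => [kE|]; last by rewrite mulr0.
by move: (ltn_ord i); rewrite -kE ltnNge kn.
Qed.

Lemma phiZ c x : phi (c *: x) = c * phi x.
Proof.
rewrite {1}(decomp c) scaler_suml (big_morph phi phiD phi0).
rewrite [in RHS](decomp c) mulr_suml; apply: eq_bigr => i _.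
by rewrite -scalerA -/(sR _ _) phiR phiE mulrA.
Qed.

Lemma phi_linear : linear_for *:%R phi.
Proof. by move=> c x y; rewrite phiD phiZ. Qed.


Lemma phi_coef x : ((phi x : A) : {poly R})`_n.-1 = lam x.
Proof.
rewrite /phi poly_of_qpoly_sum coef_sum.
rewrite (eq_bigr (fun i : 'I_n => lam (e i *: x) * ((n.-1 == n.-1 - i)%N)%:R)); last first.
  move=> i _; rewrite poly_of_qpolyZ val_e ?coefZ ?coefXn //.
  by apply: leq_ltn_trans (leq_subr _ _) _; rewrite prednK.
rewrite (bigD1 (Ordinal n_gt0)) //= subn0 eqxx mulr1 e0 scale1r big1 ?addr0 // => i.
move=> /eqP ni; case: eqP => [E|]; last by rewrite mulr0.
exfalso; apply: ni; apply: val_inj => /=.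
have := ltn_ord i; move: E; case: (nat_of_ord i) => // j.
move=> E jn; lia.
Qed.

End Phi.

Theorem proposition3p5p2 (R : idomainType) (n : nat) (M : lmodType (truncpoly R n)) :
  noetherian R -> (0 < n)%N -> finite_type_mod M ->
  forall m : M, ker_tM m <-> torsion m.
Proof.
move=> _ n0 [s Hs] m; split; last first.
  move=> [alpha [nzd Ha]]; apply: functional_extensionality => f.
  rewrite /t_M; apply: nzd.
  have := linearZ_LR f alpha m; rewrite Ha linear0 => E.
  exact: (esym E).
move=> Hker; apply: NNPP => Hnt.
have tf : forall a : R, sR a m = 0 -> a = 0.
  move=> a Ha; apply: NNPP => an0; apply: Hnt; exists (a%:A); split => // v.
  rewrite mulr_algl => /(congr1 (fun q : truncpoly R n => (q : {poly R}))).
  rewrite poly_of_qpolyZ => /eqP; rewrite scale_poly_eq0 => /orP [/eqP//|/eqP v0].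
  by apply: val_inj.
pose gens := [seq e R n j *: x | x <- s, j <- iota 0 n].
have [lam [lm0 Hl]] := core tf gens.
have all_span y : span m gens y.
  have [cs [_ ->]] := Hs y.
  elim/big_ind: _ => [|a b|i _]; [exact: span0|exact: span_add|].
  rewrite (decomp n0 cs`_i) scaler_suml.
  elim/big_ind: _ => [|a b|j _]; [exact: span0|exact: span_add|].
  rewrite -scalerA -/(sR _ _) -[sR _ _]addr0; apply: span_lin; last exact: span0.
  apply: span_mem; apply: allpairs_f; first exact: mem_nth.
  by rewrite mem_iota add0n leq0n ltn_ord.
have hlam a y z : lam (sR a y + z) = a * lam y + lam z by apply: Hl.
pose L : {linear M -> (truncpoly R n)^o} :=
  HB.pack (phi lam) (GRing.isLinear.Build _ _ _ _ (phi lam) (phi_linear n0 hlam)).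
have := congr1 (fun F => F L) Hker; rewrite /t_M /= => E.
move: lm0; rewrite -(phi_coef n0 lam m).
by rewrite E /= coef0 eqxx.
Qed.
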